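(* Let $\mathcal{X}$ be a connected $n$-premaniplex with base flag $x_0$, let $(\mathcal{Y},\eta)$ be an $(n,m)$-voltage operator with $\mathcal{Y}$ connected and base flag $y_0$, let $N=\operatorname{Stab}_{\mathcal{C}^n}(x_0)$, $L=\operatorname{Stab}_{\mathcal{C}^m}(y_0)$, and let $\zeta:L\to\mathcal{C}^n$ be $\zeta(\omega)=\eta(W_\omega(y_0))$. Then $\operatorname{Stab}_{\mathcal{C}^m}(x_0,y_0)=\zeta^{-1}(N)$. In particular, if $\mathcal{X}\rtimes_\eta\mathcal{Y}$ is connected, it is isomorphic to the coset premaniplex $\mathcal{C}^m/\zeta^{-1}(N)$, with $(x_0,y_0)$ corresponding to the coset $\zeta^{-1}(N)$.
   Context: An $n$-premaniplex is an edge-coloured graph (semi-edges and parallel edges allowed) with colours $\{0,\dots,n-1\}$ such that every vertex (flag) is the start of exactly one dart of each colour, and for $|i-j|\ge2$ alternating $i,j$-paths of length 4 are closed; $x^i$ is the $i$-adjacent flag of $x$. $\mathcal{C}^n=\langle r_0,\dots,r_{n-1}\mid r_i^2,\ (r_ir_j)^2\ (|i-j|\ge2)\rangle$ acts on the left on flags by $r_ix=x^i$. For a subgroup $K\le\mathcal{C}^m$, the coset premaniplex $\mathcal{C}^m/K$ has flags the left cosets $\omega K$, with $(\omega K)^i=r_i\omega K$. For a flag $y$ of an $m$-premaniplex $\mathcal{Y}$ and $\omega\in\mathcal{C}^m$, $W_\omega(y)$ is the homotopy class of paths from $y$ whose colour sequence $i_1,\dots,i_k$ satisfies $r_{i_k}\cdots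 r_{i_1}=\omega$; these form the fundamental groupoid $\Pi(\mathcal{Y})$. A voltage assignment $\eta:\Pi(\mathcal{Y})\to\mathcal{C}^n$ satisfies $\eta(W_1W_2)=\eta(W_2)\eta(W_1)$; $(\mathcal{Y},\eta)$ is an $(n,m)$-voltage operator. $\mathcal{X}\rtimes_\eta\mathcal{Y}$ has flags $\mathcal{X}\times\mathcal{Y}$ and $(x,y)^i=(\eta(W_{r_i}(y))x,r_iy)$, $i\in\{0,\dots,m-1\}$; hence $\omega(x,y)=(\eta(W_\omega(y))x,\omega y)$. *)

(* Defs.v *)
From Stdlib Require Import Relations ClassicalEpsilon.
From HB Require Import structures.
From mathcomp Require Import all_boot.

Set Implicit Arguments.
Unset Strict Implicit.
Unset Printing Implicit Defensive.

Definition far (i j : nat) : bool := (i.+1 < j) || (j.+1 < i).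

(* ---------- The group C^n = < r_0..r_{n-1} | r_i^2, (r_i r_j)^2 (|i-j|>=2) > ----
   An element is represented by a word [:: a1; ...; ak] standing for
   r_{a1} r_{a2} ... r_{ak}; two words represent the same element iff they are
   related by [ceq], the congruence generated by the relators (since all
   generators are involutions, the monoid presentation gives the group). *)
Inductive cstep (n : nat) : seq 'I_n -> seq 'I_n -> Prop :=
| cstep_sq (s t : seq 'I_n) (i : 'I_n) :
    cstep (s ++ [:: i; i] ++ t) (s ++ t)
| cstep_rel (s t : seq 'I_n) (i j : 'I_n) :
    far i j -> cstep (s ++ [:: i; j; i; j] ++ t) (s ++ t).

Definition ceq (n : nat) : relation (seq 'I_n) :=
  clos_refl_sym_trans _ (@cstep n).

Definition is_premaniplex (n : nat) (F : Type) (adj : 'I_n -> F -> F) : Prop :=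
  (forall i x, adj i (adj i x) = x) /\
  (forall (i j : 'I_n) x, far i j -> adj j (adj i (adj j (adj i x))) = x).

Definition act (n : nat) (F : Type) (adj : 'I_n -> F -> F) (w : seq 'I_n) (x : F)
  : F := foldr adj x w.

Definition connected (n : nat) (F : Type) (adj : 'I_n -> F -> F) : Prop :=
  forall x y : F, exists w : seq 'I_n, act adj w x = y.

Definition Stab (n : nat) (F : Type) (adj : 'I_n -> F -> F) (x : F)
  : seq 'I_n -> Prop := fun w => act adj w x = x.

(* ---------- voltage operators ----------
   Elements of the fundamental groupoid are W_omega(y), i.e. pairs (y, omega);
   eta y w := eta(W_w(y)).  It must depend only on the group element w, and
   eta(W1 W2) = eta(W2) eta(W1), i.e.
   eta(W_{w2 w1}(y)) = eta(W_{w2}(w1 y)) eta(W_{w1}(y)). *)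
Definition is_voltage (n m : nat) (FY : Type) (adjY : 'I_m -> FY -> FY)
  (eta : FY -> seq 'I_m -> seq 'I_n) : Prop :=
  (forall y w w', ceq w w' -> ceq (eta y w) (eta y w')) /\
  (forall y w1 w2,
      ceq (eta y (w2 ++ w1)) (eta (act adjY w1 y) w2 ++ eta y w1)).

Definition vprod_adj (n m : nat) (FX FY : Type) (adjX : 'I_n -> FX -> FX)
  (adjY : 'I_m -> FY -> FY) (eta : FY -> seq 'I_m -> seq 'I_n)
  (i : 'I_m) (z : FX * FY) : FX * FY :=
  (act adjX (eta z.2 [:: i]) z.1, adjY i z.2).

(* zeta^{-1}(N) where L = Stab(y0), zeta(w) = eta(W_w(y0)), N = Stab(x0) *)
Definition zeta_preim (n m : nat) (FX FY : Type) (adjX : 'I_n -> FX -> FX)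
  (adjY : 'I_m -> FY -> FY) (eta : FY -> seq 'I_m -> seq 'I_n)
  (x0 : FX) (y0 : FY) : seq 'I_m -> Prop :=
  fun w => Stab adjY y0 w /\ Stab adjX x0 (eta y0 w).

(* ---------- coset premaniplex C^n / K ----------
   the left coset wK as the set of words representing its elements *)
Definition lcoset (n : nat) (K : seq 'I_n -> Prop) (w : seq 'I_n)
  : seq 'I_n -> Prop := fun u => exists2 k, K k & ceq u (w ++ k).

Definition coset_flag (n : nat) (K : seq 'I_n -> Prop) : Type :=
  {S : seq 'I_n -> Prop | exists w, S = lcoset K w}.

Definition coset_rep (n : nat) (K : seq 'I_n -> Prop) (S : coset_flag K)
  : seq 'I_n :=
  proj1_sig (constructive_indefinite_description _ (proj2_sig S)).

Definition coset_adj (n : nat) (K : seq 'I_n -> Prop) (i : 'I_n)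
  (S : coset_flag K) : coset_flag K :=
  exist (fun T => exists w, T = lcoset K w) (lcoset K (i :: coset_rep S))
        (ex_intro _ (i :: coset_rep S) erefl).

Definition pm_iso (n : nat) (F1 F2 : Type) (adj1 : 'I_n -> F1 -> F1)
  (adj2 : 'I_n -> F2 -> F2) (f : F1 -> F2) : Prop :=
  bijective f /\ (forall i x, f (adj1 i x) = adj2 i (f x)).

(* Main.v *)
Require Import Defs.
From mathcomp Require Import all_boot.
From Stdlib Require Import Relations FunctionalExtensionality PropExtensionality ProofIrrelevance ClassicalEpsilon.

Set Implicit Arguments.
Unset Strict Implicit.
Unset Printing Implicit Defensive.

Lemma act_cat k (F : Type) (adj : 'I_k -> F -> F) u v z :
  act adj (u ++ v) z = act adj u (act adj v z).
Proof. by rewrite /act foldr_cat. Qed.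

Lemma ceq_ctx k (u v s t : seq 'I_k) : ceq u v -> ceq (s ++ u ++ t) (s ++ v ++ t).
Proof.
elim.
- move=> a b [s0 t0 i|s0 t0 i j Hf].
  + apply: rst_step.
    have -> : s ++ (s0 ++ [:: i; i] ++ t0) ++ t = (s ++ s0) ++ [:: i; i] ++ (t0 ++ t)
      by rewrite -!catA.
    have -> : s ++ (s0 ++ t0) ++ t = (s ++ s0) ++ (t0 ++ t) by rewrite -!catA.
    exact: cstep_sq.
  + apply: rst_step.
    have -> : s ++ (s0 ++ [:: i; j; i; j] ++ t0) ++ t
       = (s ++ s0) ++ [:: i; j; i; j] ++ (t0 ++ t) by rewrite -!catA.
    have -> : s ++ (s0 ++ t0) ++ t = (s ++ s0) ++ (t0 ++ t) by rewrite -!catA.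
    exact: cstep_rel.
- move=> a; exact: rst_refl.
- move=> a b _ H; exact: rst_sym.
- move=> a b c _ H1 _ H2; exact: rst_trans H1 H2.
Qed.

Lemma ceq_catr k (u v : seq 'I_k) : ceq (u ++ rev u) [::].
Proof.
elim: u => [|a u IH] /=; first exact: rst_refl.
rewrite rev_cons -cats1.
apply: rst_trans (_ : ceq ([:: a] ++ [::] ++ [:: a]) _).
  have := ceq_ctx [:: a] [:: a] IH.
  by rewrite /= -!catA.
have := @cstep_sq k [::] [::] a; rewrite /= => H; exact: rst_step.
Qed.

Lemma ceq_catl k (u : seq 'I_k) : ceq (rev u ++ u) [::].
Proof. have := ceq_catr (rev u) (rev u); by rewrite revK. Qed.

Definition good k (F : Type) (adj : 'I_k -> F -> F) :=
  forall u v z, ceq u v -> act adj u z = act adj v z.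

Lemma good_rev k (F : Type) (adj : 'I_k -> F -> F) w z :
  good adj -> act adj (rev w) (act adj w z) = z.
Proof. move=> G; rewrite -act_cat; exact: (G _ [::] z (ceq_catl w)). Qed.

Lemma good_rev' k (F : Type) (adj : 'I_k -> F -> F) w z :
  good adj -> act adj w (act adj (rev w) z) = z.
Proof. move=> G; rewrite -act_cat; exact: (G _ [::] z (ceq_catr w w)). Qed.

Lemma far_sym i j : far i j -> far j i.
Proof. by rewrite /far orbC. Qed.

Lemma pm_good k (F : Type) (adj : 'I_k -> F -> F) : is_premaniplex adj -> good adj.
Proof.
move=> [H1 H2] u v z; elim.
- move=> a b [s t i|s t i j Hf]; rewrite !act_cat /=.
  + by rewrite H1.
  + by rewrite H2 // far_sym.
- by [].
- by move=> a b _ ->.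
- by move=> a b c _ -> _ ->.
Qed.

Theorem lemma5p2 (n m : nat)
  (FX : Type) (adjX : 'I_n -> FX -> FX) (x0 : FX)
  (FY : Type) (adjY : 'I_m -> FY -> FY) (y0 : FY)
  (eta : FY -> seq 'I_m -> seq 'I_n) :
  is_premaniplex adjX -> connected adjX ->
  is_premaniplex adjY -> connected adjY ->
  is_voltage adjY eta ->
  (forall w : seq 'I_m,
      Stab (vprod_adj adjX adjY eta) (x0, y0) w <->
      zeta_preim adjX adjY eta x0 y0 w) /\
  (connected (vprod_adj adjX adjY eta) ->
   exists phi : FX * FY -> coset_flag (zeta_preim adjX adjY eta x0 y0),
     pm_iso (vprod_adj adjX adjY eta)
            (@coset_adj m (zeta_preim adjX adjY eta x0 y0)) phi /\
     proj1_sig (phi (x0, y0)) = zeta_preim adjX adjY eta x0 y0).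
Proof.
move=> pX _ pY _ [V1 V2].
have gX := pm_good pX; have gY := pm_good pY.
set P := vprod_adj adjX adjY eta.
have e0 : forall y x, act adjX (eta y [::]) x = x.
  move=> y x; set e := eta y [::].
  have He : act adjX e x = act adjX e (act adjX e x).
    by rewrite -act_cat; apply: gX; exact: (V2 y [::] [::]).
  by rewrite -{2}(good_rev e x gX) {2}He good_rev.
have L1 : forall w x y, act P w (x, y) = (act adjX (eta y w) x, act adjY w y).
  elim=> [|i w IH] x y /=; first by rewrite e0.
  rewrite IH /P /vprod_adj /=.
  rewrite (gX (eta y (i :: w)) _ x (V2 y w [:: i])) act_cat //.
have gP : good P.
  move=> u v [x y] H; rewrite !L1 (gY _ _ _ H).
  by rewrite (gX _ _ _ (V1 y _ _ H)).
set z0 := (x0, y0).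
have part1 : forall w, Stab P z0 w <-> zeta_preim adjX adjY eta x0 y0 w.
  move=> w; rewrite /Stab /zeta_preim /Stab L1; split.
    by case=> -> ->.
  by case=> -> ->.
split; first exact: part1.
move=> conn.
set K := zeta_preim adjX adjY eta x0 y0.
have EK : K = Stab P z0.
  apply: functional_extensionality => w; apply: propositional_extensionality.
  by split => /part1.
rewrite EK; clear EK part1 K.
have Kc : forall u v, lcoset (Stab P z0) u = lcoset (Stab P z0) v <->
                      act P u z0 = act P v z0.
  move=> u v; split.
    move=> E.
    have : lcoset (Stab P z0) u u by exists [::]; [done | rewrite cats0; exact: rst_refl].
    rewrite E => -[k Hk Hc].
    by rewrite (gP _ _ _ Hc) act_cat Hk.
  have gen : forall a b, act P a z0 = act P b z0 ->
      forall t, lcoset (Stab P z0) a t -> lcoset (Stab P z0) b t.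
    move=> a b Hab t [k Hk Hc].
    exists (rev b ++ a ++ k).
      by rewrite /Stab !act_cat Hk Hab good_rev.
    apply: rst_trans Hc _.
    have := ceq_ctx [::] (a ++ k) (rst_sym _ _ _ _ (ceq_catr b b)).
    by rewrite /= !catA.
  move=> H; apply: functional_extensionality => t; apply: propositional_extensionality.
  by split; apply: gen.
have wz : forall z, {w | act P w z0 = z}.
  move=> z; apply: constructive_indefinite_description; exact: conn.
pose phi (z : FX * FY) : coset_flag (Stab P z0) :=
  exist (fun T => exists w, T = lcoset (Stab P z0) w)
        (lcoset (Stab P z0) (sval (wz z))) (ex_intro _ (sval (wz z)) erefl).
have repP : forall S : coset_flag (Stab P z0), sval S = lcoset (Stab P z0) (coset_rep S).
  move=> S; rewrite /coset_rep.
  exact: (proj2_sig (constructive_indefinite_description _ (proj2_sig S))).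
have sigE : forall S T : coset_flag (Stab P z0), sval S = sval T -> S = T.
  move=> [s ps] [t pt] /= E; subst t; by rewrite (proof_irrelevance _ ps pt).
pose g (S : coset_flag (Stab P z0)) := act P (coset_rep S) z0.
have gphi : forall z, g (phi z) = z.
  move=> z; rewrite /g.
  have := repP (phi z); rewrite /= => /Kc <-; exact: (svalP (wz z)).
exists phi; split; last first.
  rewrite /=; apply: functional_extensionality => t; apply: propositional_extensionality.
  have Hs : Stab P z0 (sval (wz z0)) by exact: (svalP (wz z0)).
  split.
    case=> k Hk Hc; rewrite /Stab (gP _ _ _ Hc) act_cat Hk; exact: Hs.
  move=> Ht; exists (rev (sval (wz z0)) ++ t).
    by move: Hs; rewrite /Stab act_cat Ht; move: (sval (wz z0)) => w0 Hs; rewrite -{1}Hs good_rev.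
  have := ceq_ctx [::] t (rst_sym _ _ _ _ (ceq_catr (sval (wz z0)) (sval (wz z0)))).
  by rewrite /= !catA.
split.
  exists g; first exact: gphi.
  move=> S; apply: sigE; rewrite [RHS]repP /=; apply: (proj2 (Kc _ _)).
  by rewrite (svalP (wz (g S))).
move=> i z; apply: sigE => /=; apply: (proj2 (Kc _ _)).
rewrite (svalP (wz (P i z))) /=.
by rewrite -/(g (phi z)) gphi.
Qed.
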